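(* Assuming $O(\log n)$-bit numerical precision, there exists an encoder-only Transformer $\mathcal E$ whose number of layers $L$ and embedding dimension $D$ are $O(1)$ (i.e. bounded by constants independent of $n$) such that $\mathcal E(x_1,\dots,x_m)_m = f_{\mathrm{TC}}(x_1,\dots,x_m)$ for every $m \le n$ and every sequence $(x_1,\dots,x_m)$ of integers with $0 \le x_i < m$ for all $i$.
   Context: The Triplet-Counting function is $f_{\mathrm{TC}}(x_1,\dots,x_n) = \big|\{(i,j) \in \{1,\dots,n\}^2 : x_i + x_j + x_n \equiv 0 \pmod n\}\big| \bmod n$. An encoder-only Transformer is a standard Transformer (token and positional embeddings, multi-head softmax attention without causal mask, so every position attends to all positions, residual connections, and token-wise MLPs with ReLU activations), and $\mathcal E(x_1,\dots,x_m)_m$ denotes its output at the last position $m$ on input $(x_1,\dots,x_m)$. *)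

(* Defs.v *)
From HB Require Import structures.
From mathcomp Require Import all_boot all_order all_algebra.
From mathcomp Require Import reals sequences exp.
Set Implicit Arguments. Unset Strict Implicit. Unset Printing Implicit Defensive.
Import Order.TTheory GRing.Theory Num.Theory.
Local Open Scope ring_scope.

(* Triplet counting.  The input (x_1,...,x_{m}) with m = k.+1 >= 1 is   *)
(* x : 'I_k.+1 -> nat (position i+1 of the paper is index i here); the  *)
(* last element x_m is x ord_max, and the modulus is the length m.      *)
Definition fTC (k : nat) (x : 'I_k.+1 -> nat) : nat :=
  #|[set ij : 'I_k.+1 * 'I_k.+1 |
       ((x ij.1 + x ij.2 + x ord_max) %% k.+1 == 0)%N]| %% k.+1.

Section Transformer.
Variable R : realType.

(* p-bit fixed-point arithmetic: the representable numbers are z/2^p    *)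
(* (z integer) in [-2^p, 2^p]  (p integer bits + p fractional bits).   *)
Definition rnd (p : nat) (x : R) : R :=
  let s : R := (2 ^ p)%:R in
  Num.max (- s) (Num.min s ((Num.floor (x * s))%:~R / s)).

Definition representable (p : nat) (x : R) : bool := rnd p x == x.

Definition rndm (p : nat) {a b : nat} (M : 'M[R]_(a, b)) : 'M[R]_(a, b) :=
  map_mx (rnd p) M.

Definition relu (x : R) : R := Num.max x 0.

Record layer (D H dh W : nat) := Layer {
  WQ : 'I_H -> 'M[R]_(D, dh);
  WK : 'I_H -> 'M[R]_(D, dh);
  WV : 'I_H -> 'M[R]_(D, dh);
  WO : 'I_H -> 'M[R]_(dh, D);
  W1 : 'M[R]_(D, W);
  b1 : 'rV[R]_W;
  W2 : 'M[R]_(W, D);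
  b2 : 'rV[R]_D }.

Record transformer (D H dh W : nat) := Transformer {
  tok : nat -> 'rV[R]_D;
  pos : nat -> 'rV[R]_D;        (* positional embedding (0-indexed) *)
  layers : seq (layer D H dh W);
  wout : 'rV[R]_D;
  bout : R }.

Definition nlayers D H dh W (T : transformer D H dh W) : nat := size (layers T).

Definition bcast {m n : nat} (b : 'rV[R]_n) : 'M[R]_(m, n) :=
  \matrix_(i < m, j < n) b 0 j.

Definition head (p : nat) {m D dh : nat} (Q K V : 'M[R]_(D, dh))
    (X : 'M[R]_(m, D)) : 'M[R]_(m, dh) :=
  let q := rndm p (X *m Q) in
  let k := rndm p (X *m K) in
  let v := rndm p (X *m V) in
  let S := rndm p (q *m k^T) in
  let E := map_mx (fun s => rnd p (expR s)) S in
  let Z := fun i : 'I_m => rnd p (\sum_(j < m) E i j) in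
  let A := \matrix_(i < m, j < m) rnd p (E i j / Z i) in
  rndm p (A *m v).

Definition layer_apply (p : nat) {m D H dh W : nat} (l : layer D H dh W)
    (X : 'M[R]_(m, D)) : 'M[R]_(m, D) :=
  let attn := rndm p (\sum_(h < H) rndm p (head p (WQ l h) (WK l h) (WV l h) X
                                           *m WO l h)) in
  let X1 := rndm p (X + attn) in
  let Hd := map_mx (fun y => rnd p (relu y)) (rndm p (X1 *m W1 l + bcast (b1 l))) in
  let F := rndm p (Hd *m W2 l + bcast (b2 l)) in
  rndm p (X1 + F).

Definition embed (p : nat) {D H dh W : nat} (T : transformer D H dh W)
    {m : nat} (x : 'I_m -> nat) : 'M[R]_(m, D) :=
  \matrix_(i < m, j < D) rnd p (tok T (x i) 0 j + pos T i 0 j).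

Definition final_states (p : nat) {D H dh W : nat} (T : transformer D H dh W)
    {m : nat} (x : 'I_m -> nat) : 'M[R]_(m, D) :=
  foldl (fun X l => layer_apply p l X) (embed p T x) (layers T).

(* E(x_1,...,x_m)_m : the (read-out) output at the last position m.   *)
Definition eval_last (p : nat) {D H dh W : nat} (T : transformer D H dh W)
    {k : nat} (x : 'I_k.+1 -> nat) : R :=
  rnd p ((row ord_max (final_states p T x) *m (wout T)^T) 0 0 + bout T).

Definition all_layers {A : Type} (P : A -> Prop) (s : seq A) : Prop :=
  foldr (fun a acc => P a /\ acc) True s.

Definition layer_representable (p : nat) {D H dh W : nat}
    (l : layer D H dh W) : Prop :=
        [/\ forall h a b, representable p (WQ l h a b),
            forall h a b, representable p (WK l h a b),
            forall h a b, representable p (WV l h a b) &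
            forall h a b, representable p (WO l h a b)] /\
        [/\ forall a b, representable p (W1 l a b),
            forall b, representable p (b1 l 0 b),
            forall a b, representable p (W2 l a b) &
            forall b, representable p (b2 l 0 b)].

Definition params_representable (p : nat) {D H dh W : nat}
    (T : transformer D H dh W) : Prop :=
  [/\ forall t j, representable p (tok T t 0 j),
      forall t j, representable p (pos T t 0 j),
      forall j, representable p (wout T 0 j),
      representable p (bout T) &
      all_layers (layer_representable p) (layers T)].

End Transformer.

(* Main.v *)
Require Import Defs.
From HB Require Import structures.
From mathcomp Require Import all_boot all_order all_algebra.
From mathcomp Require Import reals sequences exp.
From mathcomp Require Import ring lra zify.
Import Order.TTheory GRing.Theory Num.Theory.
Local Open Scope ring_scope.

Section Basic.
Variable R : realType.
Variable p : nat.
Local Notation s := ((2 ^ p)%:R : R).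

Lemma s_gt0 : 0 < s. Proof. by rewrite ltr0n expn_gt0. Qed.
Lemma s_ge1 : 1 <= s. Proof. by rewrite ler1n expn_gt0. Qed.

Lemma rnd_int (z : R) : z \is a Num.int -> `|z| <= s -> rnd p z = z.
Proof.
move=> zi zb; rewrite /rnd.
have hs : z * s \is a Num.int by rewrite rpredM // rpred_nat.
rewrite (floorK hs) mulfK; last by rewrite gt_eqF // s_gt0.
move: zb; rewrite ler_norml => /andP[h1 h2].
rewrite (min_r h2) (max_r h1) //.
Qed.

Lemma rnd_hi (x : R) : s <= x -> rnd p x = s.
Proof.
move=> h; rewrite /rnd.
have ss : s * s \is a Num.int by rewrite rpredM // rpred_nat.
have h2 : s * s <= (Num.floor (x * s))%:~R.
  rewrite -(floorK ss) ler_int; apply: le_floor; rewrite ler_wpM2r //; exact: ltW s_gt0.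
have h3 : s <= (Num.floor (x * s))%:~R / s by rewrite ler_pdivlMr ?s_gt0.
rewrite (min_l h3) max_r //; have := s_gt0; lra.
Qed.

Lemma rnd_lo (x : R) : x <= - s -> rnd p x = - s.
Proof.
move=> h; rewrite /rnd.
have ss : s * s \is a Num.int by rewrite rpredM // rpred_nat.
have h2 : (Num.floor (x * s))%:~R <= - (s * s).
  apply: le_trans (floor_le _) _; rewrite -mulNr ler_wpM2r //; exact: ltW s_gt0.
have h3 : (Num.floor (x * s))%:~R / s <= - s by rewrite ler_pdivrMr ?s_gt0 // mulNr.
have := s_gt0 => hs.
rewrite min_r; last by lra.
by rewrite max_l.
Qed.

Lemma rnd_expR_hi : rnd p (expR s) = s.
Proof. apply: rnd_hi; apply: le_trans (expR_ge1Dx _); lra. Qed.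

Lemma rnd_expR_lo : rnd p (expR (- s)) = 0.
Proof.
rewrite /rnd.
have hs := s_gt0.
have e0 := expR_gt0 (- s).
have e1 : expR (- s) * s < 1.
  rewrite expRN -ltr_pdivlMl ?invr_gt0 ?expR_gt0 // invrK.
  rewrite mulr1; apply: (lt_le_trans _ (expR_ge1Dx _)); lra.
have -> : Num.floor (expR (- s) * s) = 0.
  apply/eqP; rewrite floor_eq /= add0r; apply/andP; split; last by [].
  by rewrite mulr_ge0 // ltW.
rewrite mul0r min_r ?max_r //; lra.
Qed.

End Basic.


Section LayerLemma.
Variable R : realType.
Variable p : nat.
Local Notation s := ((2 ^ p)%:R : R).
Variable D : nat.
Variables (B eps c : R) (Lc : seq (R * 'I_D.+1)) (w src dst : 'I_D.+1).

Definition Qm : 'M[R]_(D.+1, 2) := \matrix_(d, e)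
  (if val e == 0%N then B * \sum_(t <- Lc) t.1 * (d == t.2)%:R
   else if d == ord0 then B * eps else 0).
Definition Km : 'M[R]_(D.+1, 2) := \matrix_(d, e)
  (if val e == 0%N then (if d == ord0 then B else 0)
   else (if d == w then 2 * B else 0)).
Definition Vm : 'M[R]_(D.+1, 2) := \matrix_(d, e)
  ((val e == 0%N) && (d == src))%:R.
Definition WOm : 'M[R]_(2, D.+1) := \matrix_(e, d)
  (if (val e == 0%N) && (d == dst) then c else 0).

Definition mkL : layer R D.+1 1 2 0 :=
  Layer (fun _ => Qm) (fun _ => Km) (fun _ => Vm) (fun _ => WOm) 0 0 0 0.

Lemma sum_delta n (F : 'I_n -> R) k : \sum_(d < n) F d * (d == k)%:R = F k.
Proof.
rewrite (bigD1 k) //= eqxx mulr1 big1 ?addr0 // => d /negbTE ->; by rewrite mulr0.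
Qed.

Variable m : nat.
Variable X : 'M[R]_(m, D.+1).
Definition Lv i := \sum_(t <- Lc) t.1 * X i t.2.
Definition sc i j := Lv i + 2 * eps * X j w.
Definition Sm i := \sum_(j | 0 < sc i j) X j src.

Hypothesis HBB : B * B = s.
Hypothesis Hci : c \is a Num.int.
Hypothesis Hei : eps \is a Num.int.
Hypothesis HBi : B \is a Num.int.
Hypothesis HLci : forall t, t \in Lc -> t.1 \is a Num.int.
Hypothesis HXi : forall i d, X i d \is a Num.int.
Hypothesis HX0 : forall i, X i ord0 = 1.
Hypothesis HXb : forall i d, `|X i d| <= s.
Hypothesis HLb : forall i, `|B * Lv i| <= s.
Hypothesis Heb : `|B * eps| <= s.
Hypothesis HBb : `|B| <= s.
Hypothesis Hwb : forall j, `|2 * B * X j w| <= s.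
Hypothesis Hsc : forall i j, sc i j != 0.
Hypothesis HSb : forall i, `|Sm i| <= s.
Hypothesis HcSb : forall i, `|c * Sm i| <= s.
Hypothesis HdSb : forall i, `|X i dst + c * Sm i| <= s.

Lemma Lv_int i : Lv i \is a Num.int.
Proof.
rewrite /Lv; elim: Lc HLci => [|t l IH] H; first by rewrite big_nil.
rewrite big_cons rpredD ?rpredM ?H ?mem_head //.
apply: IH => u hu; apply: H; by rewrite in_cons hu orbT.
Qed.

Lemma rndm_id a b (M : 'M[R]_(a, b)) :
  (forall i j, M i j \is a Num.int) -> (forall i j, `|M i j| <= s) -> rndm p M = M.
Proof. move=> h1 h2; apply/matrixP => i j; rewrite mxE rnd_int //. Qed.

Lemma layer_mkL :
  layer_apply p mkL X = \matrix_(i, d) (X i d + (d == dst)%:R * (c * Sm i)).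
Proof.
have qE : X *m Qm = \matrix_(i, e) (if val e == 0%N then B * Lv i else B * eps).
  apply/matrixP => i e; rewrite !mxE.
  under eq_bigr do rewrite mxE.
  case: (val e == 0%N) => /=.
    under eq_bigr do rewrite mulrCA.
    rewrite -mulr_sumr; congr (_ * _).
    under eq_bigr do rewrite big_distrr /=.
    rewrite exchange_big /Lv; apply: eq_bigr => t _ /=.
    under eq_bigr do rewrite mulrCA.
    by rewrite -mulr_sumr sum_delta mulrC.
  rewrite (bigD1 ord0) //= HX0 mul1r big1 ?addr0 // => d /negbTE ->; by rewrite mulr0.
have kE : X *m Km = \matrix_(j, e) (if val e == 0%N then B else 2 * B * X j w).
  apply/matrixP => j e; rewrite !mxE.
  under eq_bigr do rewrite mxE /=.
  case: (val e == 0%N) => /=.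
    rewrite (bigD1 ord0) //= HX0 mul1r big1 ?addr0 // => d /negbTE ->; by rewrite mulr0.
  rewrite (bigD1 w) //= ?eqxx mulrC big1 ?addr0 // => d /negbTE ->; by rewrite mulr0.
have vE : X *m Vm = \matrix_(j, e) (if val e == 0%N then X j src else 0).
  apply/matrixP => j e; rewrite !mxE.
  under eq_bigr do rewrite mxE /=.
  case: (val e == 0%N) => /=; last by rewrite big1 // => d _; rewrite mulr0.
  exact: sum_delta.
have qR : rndm p (X *m Qm) = X *m Qm.
  apply: rndm_id => i e; rewrite qE mxE; case: ifP => _ //.
  - by rewrite rpredM // Lv_int.
  - by rewrite rpredM.
have kR : rndm p (X *m Km) = X *m Km.
  apply: rndm_id => i e; rewrite kE mxE; case: ifP => _ //.
  - by rewrite rpredM // rpredM // rpred_nat.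
have vR : rndm p (X *m Vm) = X *m Vm.
  apply: rndm_id => i e; rewrite vE mxE; case: ifP => _ //; by rewrite normr0 ltW // s_gt0.
have hs := s_gt0 R p.
have SE : rndm p ((X *m Qm) *m (X *m Km)^T) =
    \matrix_(i, j) (if 0 < sc i j then s else - s).
  rewrite qE kE; apply/matrixP => i j; rewrite !mxE big_ord_recr big_ord1 /= !mxE /=.
  have -> : B * Lv i * B + B * eps * (2 * B * X j w) = s * sc i j.
    by rewrite -HBB /sc; ring.
  have sci : sc i j \is a Num.int.
    by rewrite /sc rpredD ?Lv_int // rpredM // rpredM // rpred_nat.
  have h1 := norm_intr_ge1 sci (Hsc i j).
  case: ifP => h.
    apply: rnd_hi; rewrite ler_pMr //; by rewrite gtr0_norm in h1.
  apply: rnd_lo; move: h => /negbT; rewrite -leNgt => h.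
  rewrite ler0_norm // in h1.
  rewrite -mulrN1 ler_pM2l //; lra.
have HE : Defs.head p Qm Km Vm X = \matrix_(i, e) (if val e == 0%N then Sm i else 0).
  rewrite /Defs.head qR kR vR SE /=.
  have EE : map_mx (fun s => rnd p (expR s)) (\matrix_(i, j) (if 0 < sc i j then s else - s) : 'M[R]_(m, m))
      = \matrix_(i, j) (if 0 < sc i j then s else 0).
    apply/matrixP => i j; rewrite !mxE; case: ifP => _.
      exact: rnd_expR_hi.
    exact: rnd_expR_lo.
  rewrite EE.
  have AE : \matrix_(i < m, j < m) rnd p ((\matrix_(i0, j0) (if 0 < sc i0 j0 then s else 0) : 'M[R]_(m,m)) i j / rnd p (\sum_(j0 < m) (\matrix_(i0, j1) (if 0 < sc i0 j1 then s else 0) : 'M[R]_(m,m)) i j0)) = \matrix_(i,j) ((0 < sc i j)%R)%:R.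
    apply/matrixP => i j; rewrite !mxE; case: ifP => h.
      rewrite (@rnd_hi _ _ (\sum_(j0 < m) _)); last first.
        rewrite (bigD1 j) //= !mxE h; rewrite lerDl sumr_ge0 // => k _; rewrite mxE; case: ifP => //; by rewrite ltW.
      by rewrite divff ?gt_eqF // rnd_int // normr1 s_ge1.
    by rewrite mul0r rnd_int // normr0 ltW.
  rewrite AE.
  have -> : \matrix_(i, j) ((0 < sc i j)%R)%:R *m (X *m Vm) = \matrix_(i, e) (if val e == 0%N then Sm i else 0 : R).
    rewrite vE; apply/matrixP => i e; rewrite !mxE.
    under eq_bigr do rewrite !mxE.
    case: (val e == 0%N) => /=; last by rewrite big1 // => j _; rewrite mulr0.
    rewrite /Sm [RHS]big_mkcond /=; apply: eq_bigr => j _; case: ifP => _; by rewrite ?mul1r ?mul0r.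
  apply: rndm_id => i e; rewrite mxE; case: ifP => _ //; last by rewrite normr0 ltW.
  by rewrite /Sm rpred_sum.
rewrite /layer_apply /= big_ord1 HE.
set Y := \matrix_(i, d) (X i d + (d == dst)%:R * (c * Sm i)).
have hw : \matrix_(i, e) (if val e == 0%N then Sm i else 0) *m WOm = \matrix_(i, d) ((d == dst)%:R * (c * Sm i)).
  apply/matrixP => i d; rewrite !mxE big_ord_recr big_ord1 /= !mxE /= mulr0 addr0.
  case: (d == dst); by rewrite ?mul1r ?mul0r ?mulr0 // mulrC.
have hwi : forall i d, ((\matrix_(i, d) ((d == dst)%:R * (c * Sm i))) : 'M[R]_(m, D.+1)) i d \is a Num.int.
  move=> i d; rewrite mxE rpredM ?rpred_nat // rpredM // /Sm rpred_sum //.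
have hwb : forall i d, `|((\matrix_(i, d) ((d == dst)%:R * (c * Sm i))) : 'M[R]_(m, D.+1)) i d| <= s.
  move=> i d; rewrite mxE; case: (d == dst); by rewrite ?mul1r ?mul0r ?normr0 ?HcSb // ltW.
rewrite hw !(@rndm_id _ _ _ hwi hwb).
have hY : rndm p (X + \matrix_(i, d) ((d == dst)%:R * (c * Sm i))) = Y.
  have -> : X + \matrix_(i, d) ((d == dst)%:R * (c * Sm i)) = Y.
    by apply/matrixP => i d; rewrite !mxE.
  apply: rndm_id => i d; rewrite mxE.
    by rewrite rpredD // rpredM ?rpred_nat // rpredM // /Sm rpred_sum.
  case: eqP => [->|_]; by rewrite ?mul1r ?mul0r ?addr0.
rewrite hY.
have z0 : forall M : 'M[R]_(m, 0), M *m 0 + bcast (0 : 'rV[R]_D.+1) = 0.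
  move=> M; apply/matrixP => i d; by rewrite !mxE big_ord0 add0r.
rewrite z0.
have -> : rndm p (0 : 'M[R]_(m, D.+1)) = 0.
  by apply/matrixP => i d; rewrite !mxE rnd_int // normr0 ltW.
rewrite addr0 rndm_id // => i d; rewrite mxE.
  by rewrite rpredD // rpredM ?rpred_nat // rpredM // /Sm rpred_sum.
case: eqP => [->|_]; by rewrite ?mul1r ?mul0r ?addr0.
Qed.
End LayerLemma.
Arguments Lv {R D} Lc {m} X i.
Arguments sc {R D} eps Lc w {m} X i j.
Arguments Sm {R D} eps Lc w src {m} X i.
Arguments mkL {R D} B eps c Lc w src dst.


Lemma layer_step (R : realType) (a D : nat) (eps c : R) (Lc : seq (R * 'I_D.+1))
   (w src dst : 'I_D.+1) (m : nat) (X : 'M[R]_(m, D.+1)) :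
  let B := (2 ^ a)%:R : R in
  c \is a Num.int -> `|c| = 1 -> eps \is a Num.int ->
  (forall t, t \in Lc -> t.1 \is a Num.int) ->
  (forall i d, X i d \is a Num.int) -> (forall i, X i ord0 = 1) ->
  (forall i d, `|X i d| <= B) -> (forall i, `|Lv Lc X i| <= B) -> `|eps| <= B ->
  (forall j, `|2 * X j w| <= B) -> (forall i j, sc eps Lc w X i j != 0) ->
  (forall i, `|Sm eps Lc w src X i| <= B) ->
  (forall i, `|X i dst + c * Sm eps Lc w src X i| <= B) ->
  layer_apply (2 * a) (mkL B eps c Lc w src dst) X =
    \matrix_(i, d) (X i d + (d == dst)%:R * (c * Sm eps Lc w src X i)).
Proof.
move=> B ci c1 ei Li Xi X0 Xb Lb eb wb scn Sb dSb.
have B1 : 1 <= B by rewrite /B ler1n expn_gt0.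
have BB : B * B = (2 ^ (2 * a))%:R by rewrite /B -natrM -expnD addnn mul2n.
have hB : forall y, `|y| <= B -> `|B * y| <= (2 ^ (2 * a))%:R.
  move=> y hy; rewrite -BB normrM ger0_norm; last lra.
  by rewrite ler_pM2l //; lra.
apply: layer_mkL => //.
- by rewrite /B rpred_nat.
- move=> i d; rewrite -BB; apply: le_trans (Xb i d) _; rewrite ler_peMr //; lra.
- move=> i; exact: hB.
- exact: hB.
- by rewrite -BB -[X in X <= _]mul1r ger0_norm ?ler_pM2r //; lra.
- by move=> j; rewrite -mulrA mulrCA hB.
- move=> i; rewrite -BB; apply: le_trans (Sb i) _; rewrite ler_peMr //; lra.
- by move=> i; rewrite normrM c1 mul1r -BB; apply: le_trans (Sb i) _; rewrite ler_peMr //; lra.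
- move=> i; rewrite -BB; apply: le_trans (dSb i) _; rewrite ler_peMr //; lra.
Qed.


Definition o0 : 'I_9 := @Ordinal 9 0 isT.
Definition o1 : 'I_9 := @Ordinal 9 1 isT.
Definition o2 : 'I_9 := @Ordinal 9 2 isT.
Definition o3 : 'I_9 := @Ordinal 9 3 isT.
Definition o4 : 'I_9 := @Ordinal 9 4 isT.
Definition o5 : 'I_9 := @Ordinal 9 5 isT.
Definition o6 : 'I_9 := @Ordinal 9 6 isT.
Definition o7 : 'I_9 := @Ordinal 9 7 isT.
Definition o8 : 'I_9 := @Ordinal 9 8 isT.

Lemma odd_diff (R : realType) (al be : nat) :
  ((2 * al + 1)%:R - (2 * be)%:R : R) != 0 /\
  (0 < ((2 * al + 1)%:R - (2 * be)%:R : R)) = (be <= al)%N.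
Proof.
rewrite subr_eq0 eqr_nat subr_gt0 ltr_nat; split.
- by apply/eqP => h; have := congr1 odd h; rewrite oddD !mul2n !odd_double.
- by apply/idP/idP => h; lia.
Qed.

Lemma sum1R (R : realType) n (P : pred 'I_n) :
  \sum_(j < n | P j) (1 : R) = (\sum_(j < n | P j) 1%N)%:R.
Proof. by rewrite natr_sum. Qed.

Lemma mkL_repr (R : realType) (a : nat) (eps c : R) (Lc : seq (R * 'I_9)) (w src dst : 'I_9) :
  (1 <= a)%N -> eps \is a Num.int -> `|eps| <= (2 ^ a)%:R -> c \is a Num.int -> `|c| = 1 ->
  (forall t, t \in Lc -> t.1 \is a Num.int) -> \sum_(t <- Lc) `|t.1| <= (2 ^ a)%:R ->
  layer_representable (2 * a) (mkL (2 ^ a)%:R eps c Lc w src dst).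
Proof.
move=> ha ei eb ci c1 Li Lb.
have B2 : 2 <= ((2 ^ a)%:R : R).
  rewrite (_ : 2 = (2 ^ 1)%:R) // ler_nat leq_exp2l //.
have BB : ((2 ^ a)%:R * (2 ^ a)%:R : R) = (2 ^ (2 * a))%:R by rewrite -natrM -expnD addnn mul2n.
have hB : forall y, `|y| <= (2 ^ a)%:R -> `|(2 ^ a)%:R * y| <= ((2 ^ (2 * a))%:R : R).
  move=> y hy; rewrite -BB normrM ger0_norm ?ler0n // ler_pM2l //; lra.
have rep : forall z : R, z \is a Num.int -> `|z| <= (2 ^ (2 * a))%:R -> representable (2 * a) z.
  by move=> z h1 h2; rewrite /representable rnd_int.
have s1 : 1 <= ((2 ^ (2 * a))%:R : R) by rewrite ler1n expn_gt0.
have Sint : forall d : 'I_9, \sum_(t <- Lc) t.1 * (d == t.2)%:R \is a Num.int.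
  move=> d; rewrite big_seq rpred_sum // => t /Li h; by rewrite rpredM ?rpred_nat.
have Sb : forall d : 'I_9, `|\sum_(t <- Lc) t.1 * (d == t.2)%:R| <= (2 ^ a)%:R.
  move=> d; apply: le_trans (ler_norm_sum _ _ _) _; apply: le_trans Lb.
  apply: ler_sum => t _; rewrite normrM; case: (d == t.2); rewrite ?normr1 ?normr0 ?mulr1 ?mulr0 //.
rewrite /layer_representable /=; split; split => *; apply: rep; rewrite ?mxE.
all: try (by rewrite rpred0).
all: try (by rewrite normr0 ler0n).
all: repeat case: ifP => _; rewrite ?rpred0 ?normr0 ?ler0n ?rpred_nat ?rpredM ?Sint ?hB ?Sb ?c1 //.
all: try (by case: (_ && _); rewrite ?normr1 ?normr0 ?ler0n).
all: try (rewrite ger0_norm; [ rewrite -BB | rewrite ?mulr_ge0 ?ler0n //]).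
all: try nra.
all: first [ exact: (@rpred_nat _ (@Num.int_num_subdef R)) | exact: (@rpred_nat _ _ 2) | exact: (@rpred_nat _ _ (2 ^ a)) ].
Qed.

Section Concrete.
Variable R : realType.
Variables (a k : nat) (x : 'I_k.+1 -> nat).
Hypothesis Hx : forall i, (x i < k.+1)%N.
Hypothesis Ha : (16 * (k.+1 * k.+1) <= 2 ^ a)%N.

Local Notation m := k.+1.
Local Notation B := ((2 ^ a)%:R : R).
Definition xl := x ord_max.

Definition cntp (h : nat) (i : 'I_m) : R :=
  \sum_(t < h) (if odd t then -1 else 1) *
     \sum_(j < m | (t./2 * m + odd t <= x i + x j + xl)%N) 1.
Definition Nv : nat := \sum_(i < m) \sum_(j < m | ((x i + x j + xl) %% m == 0)%N) 1%N.

Definition F (lv : nat) (i : 'I_m) (d : 'I_9) : R :=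
  match val d with
  | 0 => 1
  | 1 => (i : nat)%:R
  | 2 => (x i)%:R
  | 3 => if (1 <= lv)%N then m%:R else 0
  | 4 => if (2 <= lv)%N then xl%:R else 0
  | 5 => if (3 <= lv)%N then ((i + 1) * m)%:R else 0
  | 6 => cntp (minn (lv - 3) 6) i
  | 7 => if (10 <= lv)%N then Nv%:R else 0
  | 8 => if (11 <= lv)%N then (m * (Nv %/ m))%:R else 0
  | _ => 0
  end.

Definition St lv : 'M[R]_(m, 9) := \matrix_(i, d) F lv i d.

Lemma count_le (P : pred 'I_m) : (\sum_(j < m | P j) 1 <= m)%N.
Proof. by rewrite sum1_card -[X in (_ <= X)%N]card_ord max_card. Qed.

Lemma Nv_le : (Nv <= m * m)%N.
Proof.
rewrite /Nv; apply: (@leq_trans (\sum_(i < m) m)); first by apply: leq_sum => i _; exact: count_le.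
by rewrite sum_nat_const card_ord.
Qed.

Lemma cntp_int h i : cntp h i \is a Num.int.
Proof.
rewrite /cntp rpred_sum // => t _; rewrite rpredM //; first by case: odd; rewrite ?rpredN rpred1.
by rewrite sum1R rpred_nat.
Qed.

Lemma cntp_b h i : (h <= 6)%N -> `|cntp h i| <= (6 * m)%:R.
Proof.
move=> hh; rewrite /cntp; apply: le_trans (ler_norm_sum _ _ _) _.
apply: (@le_trans _ _ (\sum_(t < h) (m%:R : R))).
  apply: ler_sum => t _; rewrite normrM sum1R [`|_%:R|]ger0_norm ?ler0n //.
  by case: odd; rewrite ?normrN normr1 mul1r ler_nat count_le.
by rewrite sumr_const card_ord -[_ *+ h]mulr_natl -natrM ler_nat leq_mul2r hh orbT.
Qed.

Lemma F_int lv i d : F lv i d \is a Num.int.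
Proof.
rewrite /F; case: d => [[|[|[|[|[|[|[|[|[|d]]]]]]]]] hd] /=; rewrite ?rpred_nat ?cntp_int ?rpred0 ?rpred1 //; by case: ifP; rewrite ?rpred_nat ?rpred0.
Qed.

Lemma B16 : (16 * (m * m))%:R <= B.
Proof. by rewrite ler_nat. Qed.

Lemma F_b lv i d : (lv <= 11)%N -> `|F lv i d| <= B.
Proof.
move=> hlv; have hB := B16.
have nb : forall n, (n <= 16 * (m * m))%N -> `|n%:R| <= B.
  by move=> n hn; rewrite ger0_norm ?ler0n //; apply: le_trans hB; rewrite ler_nat.
have hi := ltn_ord i; have hxi := Hx i; have hxl := Hx ord_max; have hN := Nv_le.
rewrite /F; case: d => [[|[|[|[|[|[|[|[|[|d]]]]]]]]] hd] /=; try (by apply: nb; nia);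
  try (case: ifP => _; [apply: nb; nia | by rewrite normr0 ler0n]).
- by rewrite normr1 ler1n expn_gt0.
- case: ifP => _; [apply: nb; rewrite /xl; nia | by rewrite normr0 ler0n].
- apply: le_trans (cntp_b _ _ _) _; first exact: geq_minr.
  by apply: le_trans hB; rewrite ler_nat; nia.
- by rewrite normr0 ler0n.
Qed.

Lemma St0 lv i : St lv i ord0 = 1.
Proof. by rewrite mxE. Qed.

Definition L1 := mkL B 0 1 [:: (1, o0)] o0 o0 o3.

Lemma nb n : (n <= 16 * (m * m))%N -> `|n%:R| <= B.
Proof. by move=> hn; rewrite ger0_norm ?ler0n //; apply: le_trans B16; rewrite ler_nat. Qed.

Lemma nb2 n n' : (n <= 16 * (m * m))%N -> (n' <= 16 * (m * m))%N -> `|n%:R - n'%:R| <= B.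
Proof.
move=> h1 h2; have b1 := nb _ h1; have b2 := nb _ h2; rewrite ger0_norm ?ler0n // in b1; rewrite ger0_norm ?ler0n // in b2.
rewrite ler_norml; apply/andP; split; have := ler0n R n; have := ler0n R n'; lra.
Qed.

Lemma Lc_int1 (c0 : R) (d0 : 'I_9) : c0 \is a Num.int -> forall t, t \in [:: (c0, d0)] -> t.1 \is a Num.int.
Proof. by move=> h t; rewrite inE => /eqP ->. Qed.
Lemma Lc_int2 (c0 c1 : R) (d0 d1 : 'I_9) : c0 \is a Num.int -> c1 \is a Num.int ->
  forall t, t \in [:: (c0, d0); (c1, d1)] -> t.1 \is a Num.int.
Proof. by move=> h0 h1 t; rewrite !inE => /orP[] /eqP ->. Qed.

Ltac side_std := first
  [ by move=> i d; rewrite mxE F_int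
  | by move=> i; rewrite St0
  | by move=> i d; rewrite mxE F_b //; lia ].

Ltac case9 d := case: d => [[|[|[|[|[|[|[|[|[|d]]]]]]]]] hd] /=.

Lemma step1 : layer_apply (2 * a) L1 (St 0) = St 1.
Proof.
have scE : forall i j, sc 0 [:: (1, o0)] o0 (St 0) i j = (2 * 0 + 1)%:R - (2 * 0)%:R.
  by move=> i j; rewrite /sc /Lv big_cons big_nil !mxE /F /=; ring.
have SmE : forall i, Sm 0 [:: (1, o0)] o0 o0 (St 0) i = m%:R.
  move=> i; rewrite /Sm; under eq_bigl => j do rewrite scE (odd_diff _ 0 0).2 /=.
  by under eq_bigr => j _ do rewrite mxE /F /=; rewrite sumr_const card_ord.
rewrite /L1 layer_step.
- apply/matrixP => i d; rewrite !mxE SmE mul1r; case9 d; rewrite /F /= ?mul0r ?addr0 ?mul1r ?add0r //.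
- by rewrite rpred1.
- by rewrite normr1.
- by rewrite rpred0.
- by apply: Lc_int1; rewrite rpred1.
all: try side_std.
- move=> i; rewrite /Lv big_cons big_nil mxE /F /= mulr1 addr0; apply: (nb 1); nia.
- by rewrite normr0 ler0n.
- move=> j; rewrite mxE /F /= mulr1; apply: (nb 2); nia.
- by move=> i j; rewrite scE (odd_diff _ 0 0).1.
- by move=> i; rewrite SmE; apply: nb; nia.
- by move=> i; rewrite SmE mxE /F /= add0r mul1r; apply: nb; nia.
Qed.


Lemma count_lt q : (q <= m)%N -> (\sum_(j < m | (j < q)%N) 1 = q)%N.
Proof. by move=> hq; rewrite (big_ord_narrow hq) sum1_card card_ord. Qed.

Definition L2 := mkL B 1 1 [:: (3, o0); (-2, o3)] o1 o2 o4.

Lemma step2 : layer_apply (2 * a) L2 (St 1) = St 2.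
Proof.
have scE : forall i j : 'I_m, sc 1 [:: (3, o0); (-2, o3)] o1 (St 1) i j
    = (2 * (j + 1) + 1)%:R - (2 * m)%:R.
  by move=> i j; rewrite /sc /Lv !big_cons big_nil !mxE /F /=; rewrite !natrD !natrM; ring.
have SmE : forall i, Sm 1 [:: (3, o0); (-2, o3)] o1 o2 (St 1) i = xl%:R.
  move=> i; rewrite /Sm; under eq_bigl => j do rewrite scE (odd_diff _ _ _).2.
  rewrite (eq_bigl (fun j => j == ord_max)); last first.
    move=> j /=; apply/idP/eqP => [h|->]; last by rewrite /= addn1.
    by apply: val_inj => /=; have := ltn_ord j; lia.
  by rewrite big_pred1_eq mxE /F /=.
rewrite /L2 layer_step.
- apply/matrixP => i d; rewrite !mxE SmE mul1r; case9 d; rewrite /F /= ?mul0r ?addr0 ?mul1r ?add0r //.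
- by rewrite rpred1.
- by rewrite normr1.
- by rewrite rpred1.
- by apply: Lc_int2; rewrite ?rpredN ?rpred1 ?rpred_nat.
all: try side_std.
- move=> i; rewrite /Lv !big_cons big_nil !mxE /F /= mulr1 addr0 mulNr.
  rewrite -natrM; apply: (nb2 3 (2 * m)); nia.
- by rewrite normr1 ler1n expn_gt0.
- move=> j; rewrite mxE /F /= -natrM; apply: nb; have := ltn_ord j; nia.
- by move=> i j; rewrite scE (odd_diff _ _ _).1.
- by move=> i; rewrite SmE; apply: nb; rewrite /xl; have := Hx ord_max; nia.
- by move=> i; rewrite SmE mxE /F /= add0r mul1r; apply: nb; rewrite /xl; have := Hx ord_max; nia.
Qed.

Definition L3 := mkL B (-1) 1 [:: (2, o1); (1, o0)] o1 o3 o5.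

Lemma step3 : layer_apply (2 * a) L3 (St 2) = St 3.
Proof.
have scE : forall i j : 'I_m, sc (-1) [:: (2, o1); (1, o0)] o1 (St 2) i j
    = (2 * i + 1)%:R - (2 * j)%:R.
  by move=> i j; rewrite /sc /Lv !big_cons big_nil !mxE /F /=; rewrite ?natrD ?natrM; ring.
have SmE : forall i : 'I_m, Sm (-1) [:: (2, o1); (1, o0)] o1 o3 (St 2) i = ((i + 1) * m)%:R.
  move=> i; rewrite /Sm; under eq_bigl => j do rewrite scE (odd_diff _ _ _).2.
  under eq_bigr => j _ do rewrite mxE /F /=.
  rewrite (eq_bigr (fun _ => 1 * m%:R)); last by move=> j _; rewrite mul1r.
  rewrite -mulr_suml sum1R natrM; congr (_ * _); congr (_%:R).
  rewrite -[RHS](@count_lt (i + 1)); last by have := ltn_ord i; lia.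
  apply: eq_bigl => j; by rewrite addn1 ltnS.
rewrite /L3 layer_step.
- apply/matrixP => i d; rewrite !mxE SmE mul1r; case9 d; rewrite /F /= ?mul0r ?addr0 ?mul1r ?add0r //.
- by rewrite rpred1.
- by rewrite normr1.
- by rewrite rpredN rpred1.
- by apply: Lc_int2; rewrite ?rpredN ?rpred1 ?rpred_nat.
all: try side_std.
- move=> i; rewrite /Lv !big_cons big_nil !mxE /F /= mulr1 addr0.
  rewrite (_ : 2 * _ + 1 = (2 * i + 1)%:R); last by rewrite natrD natrM.
  apply: nb; have := ltn_ord i; nia.
- by rewrite normrN normr1 ler1n expn_gt0.
- move=> j; rewrite mxE /F /= -natrM; apply: nb; have := ltn_ord j; nia.
- by move=> i j; rewrite scE (odd_diff _ _ _).1.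
- by move=> i; rewrite SmE; apply: nb; have := ltn_ord i; nia.
- by move=> i; rewrite SmE mxE /F /= add0r mul1r; apply: nb; have := ltn_ord i; nia.
Qed.

Definition sg (t : nat) : R := if odd t then -1 else 1.
Definition Lct (t : nat) := mkL B 1 (sg t)
  [:: (2, o2); (2, o4); (-(2 * (t./2)%:R), o3); (sg t, o0)] o2 o0 o6.

Lemma sgE t : sg t = 1 - 2 * (odd t)%:R.
Proof. by rewrite /sg; case: odd; rewrite /= ?mulr1 ?mulr0 ?subr0 //; ring. Qed.

Lemma sg_int t : sg t \is a Num.int.
Proof. by rewrite /sg; case: odd; rewrite ?rpredN rpred1. Qed.

Lemma cntp_S t i : cntp t.+1 i = cntp t i +
  sg t * \sum_(j < m | (t./2 * m + odd t <= x i + x j + xl)%N) 1.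
Proof. by rewrite /cntp big_ord_recr. Qed.

Lemma stepc t : (t < 6)%N -> layer_apply (2 * a) (Lct t) (St (3 + t)) = St (4 + t).
Proof.
move=> ht.
have scE : forall i j : 'I_m, sc 1 [:: (2, o2); (2, o4); (-(2 * (t./2)%:R), o3); (sg t, o0)] o2 (St (3 + t)) i j
    = (2 * (x i + x j + xl) + 1)%:R - (2 * (t./2 * m + odd t))%:R.
  move=> i j; rewrite /sc /Lv !big_cons big_nil !mxE /F /= sgE.
  by rewrite ?natrD ?natrM; ring.
have SmE : forall i, Sm 1 [:: (2, o2); (2, o4); (-(2 * (t./2)%:R), o3); (sg t, o0)] o2 o0 (St (3 + t)) i
    = \sum_(j < m | (t./2 * m + odd t <= x i + x j + xl)%N) 1.
  move=> i; rewrite /Sm; under eq_bigl => j do rewrite scE (odd_diff _ _ _).2.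
  by apply: eq_bigr => j _; rewrite mxE.
have mainE : forall i, cntp t i + sg t * Sm 1 [:: (2, o2); (2, o4); (-(2 * (t./2)%:R), o3); (sg t, o0)] o2 o0 (St (3 + t)) i
    = cntp t.+1 i by move=> i; rewrite SmE cntp_S.
have h1 : minn (3 + t - 3) 6 = t by rewrite addKn; apply/minn_idPl; lia.
have h2 : minn (4 + t - 3) 6 = t.+1 by rewrite (_ : 4 + t - 3 = t.+1)%N; [apply/minn_idPl; lia | lia].
have h3 : (10 <= 3 + t)%N = false by lia.
have h4 : (10 <= 4 + t)%N = false by lia.
have h5 : (11 <= 3 + t)%N = false by lia.
have h6 : (11 <= 4 + t)%N = false by lia.
rewrite /Lct layer_step.
- apply/matrixP => i d; rewrite !mxE; case9 d; rewrite /F ?h1 ?h2 ?h3 ?h4 ?h5 ?h6 /= ?mul0r ?addr0 ?mul1r ?add0r //.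
- exact: sg_int.
- by rewrite /sg; case: odd; rewrite ?normrN normr1.
- by rewrite rpred1.
- move=> u; rewrite !inE => /or4P[] /eqP -> //=; rewrite ?rpredN ?rpredM ?rpred_nat ?sg_int //.
all: try side_std.
- move=> i; rewrite /Lv !big_cons big_nil !mxE /F /= sgE.
  rewrite (_ : _ + _ = (2 * x i + 2 * xl + 1)%:R - (2 * (t./2 * m) + 2 * odd t)%:R); last first.
    by rewrite ?natrD ?natrM; ring.
  apply: nb2; rewrite /xl; have := Hx i; have := Hx ord_max.
    lia.
  have : (t./2 <= 2)%N by lia.
  case: (odd t) => /=; nia.
- by rewrite normr1 ler1n expn_gt0.
- move=> j; rewrite mxE /F /= -natrM; apply: nb; have := Hx j; nia.
- by move=> i j; rewrite scE (odd_diff _ _ _).1.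
- move=> i; rewrite SmE sum1R; apply: nb; have := count_le (fun j => (t./2 * m + odd t <= x i + x j + xl)%N); nia.
- move=> i; rewrite mxE /F h1 /= mainE; apply: le_trans (cntp_b _ _ _) _; first lia.
  by apply: le_trans B16; rewrite ler_nat; nia.
Qed.

Lemma six s mm : (0 < mm)%N -> (s < 3 * mm)%N ->
  (1 + (mm <= s) + (2 * mm <= s) = (1 <= s) + (mm + 1 <= s) + (2 * mm + 1 <= s) + (s %% mm == 0))%N.
Proof.
move=> h1 h2; case: (ltnP s mm) => h.
  rewrite modn_small //; lia.
case: (ltnP s (2 * mm)) => h'.
  have -> : (s %% mm = s - mm)%N.
    by rewrite -{1}(subnKC h) -{1}(mul1n mm) modnMDl modn_small //; lia.
  lia.
have -> : (s %% mm = s - 2 * mm)%N.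
  by rewrite -{1}(subnKC h') modnMDl modn_small //; lia.
lia.
Qed.

Lemma cntp6 i : cntp 6 i = (\sum_(j < m | ((x i + x j + xl) %% m == 0)%N) 1)%:R.
Proof.
rewrite /cntp natr_sum big_mkcond /=.
under eq_bigr => t _ do rewrite sum1R natr_sum big_mkcond /= mulr_sumr.
rewrite exchange_big /= [RHS]big_mkcond; apply: eq_bigr => j _.
rewrite !big_ord_recl big_ord0 /= !mul0n !mul1n !addn0.
set s := (x i + x j + xl)%N.
have hs : (s < 3 * m)%N by rewrite /s /xl; have := Hx i; have := Hx j; have := Hx ord_max; lia.
have E := @six _ _ (ltn0Sn k) hs.
have bE : forall b : bool, (if b then 1 else 0 : R) = (b : nat)%:R by case.
rewrite !bE; have := congr1 (fun n => n%:R : R) E; rewrite !natrD /= => E'.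
lra.
Qed.


Definition L10 := mkL B 0 1 [:: (1, o0)] o0 o6 o7.

Lemma step10 : layer_apply (2 * a) L10 (St 9) = St 10.
Proof.
have scE : forall i j, sc 0 [:: (1, o0)] o0 (St 9) i j = (2 * 0 + 1)%:R - (2 * 0)%:R.
  by move=> i j; rewrite /sc /Lv big_cons big_nil !mxE /F /=; ring.
have SmE : forall i, Sm 0 [:: (1, o0)] o0 o6 (St 9) i = Nv%:R.
  move=> i; rewrite /Sm; under eq_bigl => j do rewrite scE (odd_diff _ 0 0).2 /=.
  under eq_bigr => j _ do rewrite mxE /F /= cntp6.
  by rewrite /Nv natr_sum.
rewrite /L10 layer_step.
- apply/matrixP => i d; rewrite !mxE SmE mul1r; case9 d; rewrite /F /= ?mul0r ?addr0 ?mul1r ?add0r //.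
- by rewrite rpred1.
- by rewrite normr1.
- by rewrite rpred0.
- by apply: Lc_int1; rewrite rpred1.
all: try side_std.
- move=> i; rewrite /Lv big_cons big_nil mxE /F /= mulr1 addr0; apply: (nb 1); nia.
- by rewrite normr0 ler0n.
- move=> j; rewrite mxE /F /= mulr1; apply: (nb 2); nia.
- by move=> i j; rewrite scE (odd_diff _ 0 0).1.
- by move=> i; rewrite SmE; apply: nb; have := Nv_le; nia.
- by move=> i; rewrite SmE mxE /F /= add0r mul1r; apply: nb; have := Nv_le; nia.
Qed.

Definition L11 := mkL B (-1) 1 [:: (2, o7); (1, o0)] o5 o3 o8.

Lemma step11 : layer_apply (2 * a) L11 (St 10) = St 11.
Proof.
have scE : forall i j : 'I_m, sc (-1) [:: (2, o7); (1, o0)] o5 (St 10) i j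
    = (2 * Nv + 1)%:R - (2 * ((j + 1) * m))%:R.
  by move=> i j; rewrite /sc /Lv !big_cons big_nil !mxE /F /=; rewrite ?natrD ?natrM; ring.
have SmE : forall i : 'I_m, Sm (-1) [:: (2, o7); (1, o0)] o5 o3 (St 10) i = (m * (Nv %/ m))%:R.
  move=> i; rewrite /Sm; under eq_bigl => j do rewrite scE (odd_diff _ _ _).2.
  under eq_bigr => j _ do rewrite mxE /F /=.
  rewrite (eq_bigr (fun _ => 1 * m%:R)); last by move=> j _; rewrite mul1r.
  rewrite -mulr_suml sum1R natrM mulrC; congr (_ * _); congr (_%:R).
  rewrite -[RHS](@count_lt (Nv %/ m)); last by rewrite -ltnS ltn_divLR //; have := Nv_le; lia.
  apply: eq_bigl => j; by rewrite leq_divRL // addn1.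
rewrite /L11 layer_step.
- apply/matrixP => i d; rewrite !mxE SmE mul1r; case9 d; rewrite /F /= ?mul0r ?addr0 ?mul1r ?add0r //.
- by rewrite rpred1.
- by rewrite normr1.
- by rewrite rpredN rpred1.
- by apply: Lc_int2; rewrite ?rpredN ?rpred1 ?rpred_nat.
all: try side_std.
- move=> i; rewrite /Lv !big_cons big_nil !mxE /F /= mulr1 addr0.
  rewrite (_ : 2 * _ + 1 = (2 * Nv + 1)%:R); last by rewrite natrD natrM.
  apply: nb; have := Nv_le; nia.
- by rewrite normrN normr1 ler1n expn_gt0.
- move=> j; rewrite mxE /F /= -natrM; apply: nb; have := ltn_ord j; nia.
- by move=> i j; rewrite scE (odd_diff _ _ _).1.
- move=> i; rewrite SmE; apply: nb; have := Nv_le; have := leq_trunc_div Nv m; rewrite mulnC; nia.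
- move=> i; rewrite SmE mxE /F /= add0r mul1r; apply: nb; have := Nv_le; have := leq_trunc_div Nv m; rewrite mulnC; nia.
Qed.

Definition tokf (v : nat) : 'rV[R]_9 :=
  \row_(j < 9) (if val j == 2%N then (minn v (2 ^ (2 * a)))%:R else 0).
Definition posf (i : nat) : 'rV[R]_9 :=
  \row_(j < 9) (if val j == 0%N then 1 else if val j == 1%N then (minn i (2 ^ (2 * a)))%:R else 0).
Definition woutv : 'rV[R]_9 :=
  \row_(j < 9) (if val j == 7%N then 1 else if val j == 8%N then -1 else 0).
Definition Tm : transformer R 9 1 2 0 :=
  Transformer tokf posf ([:: L1; L2; L3] ++ map Lct (iota 0 6) ++ [:: L10; L11]) woutv 0.

Lemma a_ge : (4 <= a)%N.
Proof.
case: (leqP 4 a) => // h; have : (2 ^ a <= 2 ^ 3)%N by rewrite leq_exp2l //; lia.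
have := Ha; rewrite /= => h1 h2; nia.
Qed.

Lemma pa : (2 ^ a <= 2 ^ (2 * a))%N.
Proof. by rewrite leq_exp2l //; lia. Qed.

Lemma embedE : embed (2 * a) Tm x = St 0.
Proof.
apply/matrixP => i d; rewrite !mxE /=.
have hi := ltn_ord i; have hxi := Hx i; have := pa => hp.
have e1 : minn (x i) (2 ^ (2 * a)) = x i by apply/minn_idPl; nia.
have e2 : minn i (2 ^ (2 * a)) = i by apply/minn_idPl; nia.
rewrite e1 e2; case9 d; rewrite /F /= ?addr0 ?add0r; rewrite rnd_int //;
  rewrite ?rpred_nat ?rpred0 ?rpred1 ?normr0 ?normr1 ?ler0n ?ler1n ?expn_gt0 //;
  try (by rewrite /cntp big_ord0);
  rewrite ger0_norm ?ler0n // ler_nat; nia.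
Qed.

Lemma finalE : final_states (2 * a) Tm x = St 11.
Proof.
rewrite /final_states embedE /=.
rewrite step1 step2 step3 (stepc 0 isT) (stepc 1 isT) (stepc 2 isT).
rewrite (stepc 3 isT) (stepc 4 isT) (stepc 5 isT).
by rewrite step10 step11.
Qed.

Lemma Nv_card : #|[set ij : 'I_m * 'I_m | ((x ij.1 + x ij.2 + x ord_max) %% m == 0)%N]| = Nv.
Proof.
rewrite /Nv pair_big_dep /= -sum1_card; apply: eq_bigl => ij; by rewrite inE.
Qed.

Lemma eval_ok : eval_last (2 * a) Tm x = (fTC x)%:R.
Proof.
rewrite /eval_last finalE /= addr0 !mxE.
rewrite (bigD1 o7) // (bigD1 o8) // big1 /=; last first.
  move=> j /andP[h1 h2]; rewrite !mxE.
  case: j h1 h2 => [[|[|[|[|[|[|[|[|[|j]]]]]]]]] hj] //= _ _; by rewrite mulr0.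
rewrite !mxE /F /= mulr1 addr0 mulrN1.
rewrite /fTC Nv_card.
have e : (Nv%:R - (m * (Nv %/ m))%:R : R) = (Nv %% m)%:R.
  by apply/eqP; rewrite subr_eq -natrD eqr_nat mulnC addnC -divn_eq.
rewrite e.
rewrite rnd_int ?rpred_nat // ger0_norm ?ler0n // ler_nat.
have := ltn_pmod Nv (ltn0Sn k); have := pa; nia.
Qed.

Lemma B16' : 16 <= B.
Proof. apply: le_trans B16; rewrite ler_nat; nia. Qed.

Lemma Lct_repr t : (t < 6)%N -> layer_representable (2 * a) (Lct t).
Proof.
move=> ht; have := B16' => hB.
apply: mkL_repr.
- by have := a_ge; lia.
- by rewrite rpred1.
- by rewrite normr1; lra.
- exact: sg_int.
- by rewrite /sg; case: odd; rewrite ?normrN normr1.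
- move=> u; rewrite !inE => /or4P[] /eqP -> //=; rewrite ?rpredN ?rpredM ?rpred_nat ?sg_int //.
- rewrite !big_cons big_nil /= addr0 normrN normrM.
  have e1 : `|sg t| = 1 by rewrite /sg; case: odd; rewrite ?normrN normr1.
  have e2 : `|(t./2)%:R : R| <= 2 by rewrite ger0_norm ?ler0n // ler_nat; lia.
  rewrite e1 (_ : `|2| = 2 :> R); last by rewrite ger0_norm.
  lra.
Qed.

Lemma Tm_repr : params_representable (2 * a) Tm.
Proof.
have hB := B16'.
have ha1 : (1 <= a)%N by have := a_ge; lia.
have rep : forall z : R, z \is a Num.int -> `|z| <= (2 ^ (2 * a))%:R -> representable (2 * a) z.
  by move=> z h1 h2; rewrite /representable rnd_int.
have s1 : 1 <= ((2 ^ (2 * a))%:R : R) by rewrite ler1n expn_gt0.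
have nbp : forall n, `|(minn n (2 ^ (2 * a)))%:R| <= ((2 ^ (2 * a))%:R : R).
  by move=> n; rewrite ger0_norm ?ler0n // ler_nat geq_minr.
rewrite /params_representable /=; split.
- move=> u j; rewrite mxE; case: ifP => _; apply: rep; by rewrite ?rpred_nat ?rpred0 ?nbp ?normr0 ?ler0n.
- move=> u j; rewrite mxE; case: ifP => _; [|case: ifP => _]; apply: rep;
  by rewrite ?rpred_nat ?rpred1 ?rpred0 ?nbp ?normr1 ?normr0 ?ler0n.
- move=> j; rewrite mxE; case: ifP => _; [|case: ifP => _]; apply: rep;
  by rewrite ?rpredN ?rpred1 ?rpred0 ?normrN ?normr1 ?normr0 ?ler0n.
- by apply: rep; rewrite ?rpred0 ?normr0 ?ler0n.
have lr := Lct_repr.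
rewrite /all_layers /=.
refine (conj _ (conj _ (conj _ (conj (lr 0 isT) (conj (lr 1 isT) (conj (lr 2 isT) (conj (lr 3 isT) (conj (lr 4 isT) (conj (lr 5 isT) (conj _ (conj _ I))))))))))).
all: rewrite /L1 /L2 /L3 /L10 /L11; apply: mkL_repr => //; rewrite ?rpred0 ?rpred1 ?rpredN ?normr0 ?normrN ?normr1 ?ler0n //;
  try lra.
all: try (by apply: Lc_int1; rewrite rpred1).
all: try (by apply: Lc_int2; rewrite ?rpredN ?rpred1 ?rpred_nat).
all: try (exact: int_num1).
all: rewrite !big_cons big_nil /= ?normrN ?normr1 ?addr0.
all: try (rewrite (_ : `|2| = 2 :> R); last by rewrite ger0_norm).
all: try (rewrite (_ : `|3| = 3 :> R); last by rewrite ger0_norm).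
all: lra.
Qed.
End Concrete.


Theorem lemma2 (R : realType) :
  exists C : nat,
  forall n : nat,
  exists (p D H dh W : nat),
    [/\ (p <= C * (trunc_log 2 n).+1)%N,
        (D <= C)%N, (H <= C)%N, (dh <= C)%N & (W <= C)%N] /\
    exists T : transformer R D H dh W,
      (nlayers T <= C)%N /\
      params_representable p T /\
      forall (k : nat), (k < n)%N ->
      forall x : 'I_k.+1 -> nat, (forall i, (x i < k.+1)%N) ->
        eval_last p T x = (fTC x)%:R.
Proof.
exists 12%N => n.
set t := (trunc_log 2 n).+1.
have ht : (n < 2 ^ t)%N by apply: trunc_log_ltn.
have e : (2 ^ (2 * t + 4) = 2 ^ t * 2 ^ t * 16)%N by rewrite mul2n -addnn !expnD.
exists (2 * (2 * t + 4))%N, 9%N, 1%N, 2%N, 0%N; split.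
  by split => //; rewrite /t; lia.
exists (Tm R (2 * t + 4)); split; first by [].
split.
  apply: (@Tm_repr R _ 0); rewrite e; have : (0 < 2 ^ t)%N by rewrite expn_gt0.
  nia.
move=> k hk x hx; apply: eval_ok => //.
rewrite e; nia.
Qed.
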